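(* Let $n>1$, $c=0$ and $\rho>0$. Let $(\mathfrak{l},g_\rho^c)$ be the metric Lie algebra described in the context. Then $(\mathfrak{l},g_\rho^c)$ is a solvsoliton: there exist $\lambda\in\mathbb{R}$ and a derivation $D$ of $\mathfrak{l}$ such that the Ricci endomorphism $\mathrm{ric}$ of the left-invariant metric defined by $g_\rho^c$ on the simply connected Lie group with Lie algebra $\mathfrak{l}$ satisfies $\mathrm{ric}=\lambda\,\mathrm{Id}+D$.
   Context: Fix $n\ge 2$, $\rho>0$, $c\ge 0$. The real Lie algebra $\mathfrak{l}$ has basis $B_a^R,B_a^I$ ($a=1,\dots,n-1$), $e_k,f_k$ ($k=0,\dots,n-1$), $Z$. Its brackets are as follows (all brackets of basis elements not listed, up to antisymmetry, are zero). On $\mathfrak{b}=\mathrm{span}\{B_a^R,B_a^I\}$: $[B_1^R,B_1^I]=2B_1^I$, and for $a\in\{2,\dots,n-1\}$: $[B_1^R,B_a^R]=B_a^R$, $[B_1^R,B_a^I]=B_a^I$, $[B_a^R,B_a^I]=\tfrac12 B_1^I$. On $\mathfrak{heis}_{2n+1}=\mathrm{span}\{e_k,f_k,Z\}$: $[e_0,f_0]=Z$, $[e_a,f_a]=-Z$ for $a\ge 1$. Also $[\mathfrak{b},Z]=0$. The mixed brackets are described after complex-bilinear extension, with $E_k:=e_k-if_k$ and $[B,\bar E_k]=\overline{[B,E_k]}$ for $B\in\mathfrak{b}$ real: for $k=0,\dots,n-1$ and $a\in\{2,\dots,n-1\}$, $[B_1^R,E_k]=-\delta_{k0}E_1-\delta_{k1}E_0$,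 $[B_a^R,E_k]=-\tfrac12(\delta_{k0}+\delta_{k1})E_a-\tfrac12\delta_{ka}(E_0-E_1)$, $[B_1^I,E_k]=-i(\delta_{k0}+\delta_{k1})(E_0-E_1)$, $[B_a^I,E_k]=\tfrac{i}{2}(\delta_{k0}+\delta_{k1})E_a-\tfrac{i}{2}\delta_{ka}(E_0-E_1)$. (Here $\mathfrak{b}$ is the Iwasawa subalgebra of $\mathfrak{su}(1,n-1)$ acting on $\mathfrak{heis}_{2n+1}=\mathbb{C}^n\oplus\mathbb{R}Z$ via the standard representation.) The inner product $g_\rho^c$ on $\mathfrak{l}$ is given by $g(B_1^R,B_1^R)=\frac{\rho+c}{\rho}$, $g(B_1^I,B_1^I)=\frac{(\rho+c)^3}{\rho^2(\rho+2c)}$, $g(B_a^R,B_a^R)=g(B_a^I,B_a^I)=\frac{\rho+c}{4\rho}$ ($a\ge2$), $g(e_0,e_0)=g(f_0,f_0)=\frac{\rho+2c}{4\rho^2}$, $g(e_a,e_a)=g(f_a,f_a)=\frac{1}{4\rho}$ ($a\ge1$), $g(Z,Z)=\frac{\rho+c}{4\rho^2(\rho+2c)}$, $g(B_1^I,Z)=-\frac{c(\rho+c)}{2\rho^2(\rho+2c)}$, and all other pairs of distinct basis vectors orthogonal. This is the left-invariant metric on the group $L$ with Lie algebra $\mathfrak{l}$ corresponding to the metric induced on the level sets $\{\rho\}\times K$ of the one-loop deformation (parameter $c$) of the quaternionic Kähler symmetric space $\mathrm{SU}(n,2)/\mathrm{S}(\mathrm{U}(n)\times\mathrm{U}(2))$,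 on which $L$ acts simply transitively and isometrically. A left-invariant metric on a simply connected solvable Lie group is a solvsoliton if $\mathrm{ric}=\lambda\mathrm{Id}+D$ with $\lambda\in\mathbb{R}$, $D$ a derivation of the Lie algebra. *)

(* Defs.v *)
From HB Require Import structures.
From mathcomp Require Import all_boot all_order all_algebra.
From mathcomp Require Import reals.
Set Implicit Arguments. Unset Strict Implicit. Unset Printing Implicit Defensive.
Import Order.TTheory GRing.Theory Num.Theory.
Local Open Scope ring_scope.

(* Generic: left-invariant Riemannian geometry of a metric Lie algebra *)
(* given in a basis b_0,...,b_{N-1} (coordinates = column vectors).    *)
(*   brk i j : coordinates of [b_i, b_j];  G : Gram matrix g(b_i,b_j). *)
Section MetricLie.
Variable R : realType.
Variable N : nat.
Variable brk : 'I_N -> 'I_N -> 'cV[R]_N.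
Variable G : 'M[R]_N.

Definition bas (i : 'I_N) : 'cV[R]_N := delta_mx i 0.

Definition lbr (x y : 'cV[R]_N) : 'cV[R]_N :=
  \sum_(i < N) \sum_(j < N) (x i 0 * y j 0) *: brk i j.

Definition gform (x y : 'cV[R]_N) : R := (x^T *m G *m y) 0 0.

(* Koszul formula for left-invariant fields:
   g(nabla_x y, z) = 1/2 (g([x,y],z) - g([y,z],x) + g([z,x],y)) *)
Definition koszul (x y z : 'cV[R]_N) : R :=
  2^-1 * (gform (lbr x y) z - gform (lbr y z) x + gform (lbr z x) y).

(* Levi-Civita connection: nabla_x y is the unique v with g(v, b_k) = koszul x y b_k *)
Definition nabla (x y : 'cV[R]_N) : 'cV[R]_N :=
  invmx G^T *m \col_k koszul x y (bas k).

Definition curv (x y z : 'cV[R]_N) : 'cV[R]_N :=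
  nabla x (nabla y z) - nabla y (nabla x z) - nabla (lbr x y) z.

Definition ricci_form (y z : 'cV[R]_N) : R :=
  \sum_(i < N) (curv (bas i) y z) i 0.

(* Ricci endomorphism ric, defined by g(ric y, z) = Ric(y, z)
   (matrix acting on column coordinate vectors) *)
Definition ricci_endo : 'M[R]_N :=
  invmx G^T *m (\matrix_(i, j) ricci_form (bas j) (bas i)).

Definition is_derivation (D : 'M[R]_N) : Prop :=
  forall x y : 'cV[R]_N, D *m lbr x y = lbr (D *m x) y + lbr x (D *m y).

End MetricLie.

(* The specific Lie algebra l = b (+) heis_{2n+1}, of dimension 4n-1.  *)

(* basis labels: BR a = B_a^R, BI a = B_a^I (1<=a<=n-1),
   Ee k = e_k, Ff k = f_k (0<=k<=n-1), Zz = Z *)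
Inductive lbl := BR of nat | BI of nat | Ee of nat | Ff of nat | Zz.

Definition decode (n i : nat) : lbl :=
  if (i < n.-1)%N then BR i.+1
  else if (i < 2 * n.-1)%N then BI (i - n.-1).+1
  else if (i < 2 * n.-1 + n)%N then Ee (i - 2 * n.-1)
  else if (i < 2 * n.-1 + 2 * n)%N then Ff (i - 2 * n.-1 - n)
  else Zz.

Section Specific.
Variable R : realType.

Definition dlt (i j : nat) : R := if i == j then 1 else 0.

Definition cBR (a : nat) (c : R) : lbl -> R :=
  fun m => match m with BR b => if b == a then c else 0 | _ => 0 end.
Definition cBI (a : nat) (c : R) : lbl -> R :=
  fun m => match m with BI b => if b == a then c else 0 | _ => 0 end.
Definition cZ (c : R) : lbl -> R :=
  fun m => match m with Zz => c | _ => 0 end.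
Definition c0 : lbl -> R := fun _ => 0.

(* Mixed brackets, complex form: [B, E_k] = sum_j (alRe B k j + i alIm B k j) E_j,
   E_j = e_j - i f_j. *)
Definition alRe (B : lbl) (k j : nat) : R :=
  match B with
  | BR a => if a == 1%N then - (dlt k 0 * dlt j 1) - dlt k 1 * dlt j 0
            else - 2^-1 * (dlt k 0 + dlt k 1) * dlt j a
                 - 2^-1 * dlt k a * (dlt j 0 - dlt j 1)
  | _ => 0
  end.
Definition alIm (B : lbl) (k j : nat) : R :=
  match B with
  | BI a => if a == 1%N then - ((dlt k 0 + dlt k 1) * (dlt j 0 - dlt j 1))
            else 2^-1 * (dlt k 0 + dlt k 1) * dlt j a
                 - 2^-1 * dlt k a * (dlt j 0 - dlt j 1)
  | _ => 0
  end.

(* Real form: with al = p + i q, [B,e_k] - i [B,f_k] = sum_j (p + i q)(e_j - i f_j),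
   hence [B,e_k] = sum_j (p e_j + q f_j) and [B,f_k] = sum_j (p f_j - q e_j). *)
Definition brBe (B : lbl) (k : nat) : lbl -> R :=
  fun m => match m with
           | Ee j => alRe B k j | Ff j => alIm B k j | _ => 0 end.
Definition brBf (B : lbl) (k : nat) : lbl -> R :=
  fun m => match m with
           | Ff j => alRe B k j | Ee j => - alIm B k j | _ => 0 end.

Definition isB (x : lbl) : bool :=
  match x with BR _ | BI _ => true | _ => false end.

(* the listed brackets [x,y] (each unordered pair listed in at most one order) *)
Definition br0 (x y : lbl) : lbl -> R :=
  match x, y with
  | BR a, BI b =>
      if (a == 1%N) && (b == 1%N) then cBI 1 2
      else if (a == 1%N) && (2 <= b)%N then cBI b 1
      else if (2 <= a)%N && (a == b) then cBI 1 2^-1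
      else c0
  | BR a, BR b => if (a == 1%N) && (2 <= b)%N then cBR b 1 else c0
  | Ee a, Ff b =>
      if (a == 0%N) && (b == 0%N) then cZ 1
      else if (1 <= a)%N && (a == b) then cZ (-1)
      else c0
  | BR _, Ee k | BI _, Ee k => brBe x k
  | BR _, Ff k | BI _, Ff k => brBf x k
  | _, _ => c0
  end.

Definition brl (x y : lbl) : lbl -> R := fun m => br0 x y m - br0 y x m.

Definition lN (n : nat) : nat := (4 * n - 1)%N.

Definition lbrk (n : nat) (i j : 'I_(lN n)) : 'cV[R]_(lN n) :=
  \col_(k < lN n) brl (decode n i) (decode n j) (decode n k).

Definition gl (rho c : R) (x y : lbl) : R :=
  match x, y with
  | BR a, BR b => if a == b then
                    (if a == 1%N then (rho + c) / rho else (rho + c) / (4 * rho))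
                  else 0
  | BI a, BI b => if a == b then
                    (if a == 1%N then (rho + c) ^+ 3 / (rho ^+ 2 * (rho + 2 * c))
                     else (rho + c) / (4 * rho))
                  else 0
  | Ee a, Ee b | Ff a, Ff b =>
      if a == b then
        (if a == 0%N then (rho + 2 * c) / (4 * rho ^+ 2) else 1 / (4 * rho))
      else 0
  | Zz, Zz => (rho + c) / (4 * rho ^+ 2 * (rho + 2 * c))
  | BI a, Zz | Zz, BI a =>
      if a == 1%N then - (c * (rho + c)) / (2 * rho ^+ 2 * (rho + 2 * c)) else 0
  | _, _ => 0
  end.

Definition gram (n : nat) (rho c : R) : 'M[R]_(lN n) :=
  \matrix_(i, j) gl rho c (decode n i) (decode n j).

End Specific.

(* Main.v *)
Require Import Defs.
From HB Require Import structures.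
From mathcomp Require Import all_boot all_order all_algebra.
From mathcomp Require Import reals.
From mathcomp Require Import ring lra zify.
Import Order.TTheory GRing.Theory Num.Theory.
Local Open Scope ring_scope.
Set Implicit Arguments. Unset Strict Implicit. Unset Printing Implicit Defensive.

(* Proof strategy:
   1. generic formula for the Ricci endomorphism of a metric Lie algebra with
      diagonal Gram matrix (Koszul formula);
   2. reduction of the (4n-1)-dimensional sums to a "fixed part" (7 labels)
      plus n-2 identical blocks (4 labels each), using the block-vanishing
      structure of the brackets;
   3. rescaling by square roots of the metric coefficients makes all
      structure constants rational and independent of rho;
   4. the remaining finite rational computations are done by vm_compute. *)
Section Gen.
Variable R : realType.
Variable N : nat.
Variable brk : 'I_N -> 'I_N -> 'cV[R]_N.
Variable G : 'M[R]_N.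
Variable d : 'I_N -> R.
Hypothesis dnz : forall i, d i != 0.
Hypothesis HG : forall i j, G i j = if i == j then d i else 0.

Local Notation C i j k := (brk i j k 0).
Definition Gam0 i j l := (C i j l * d l - C j l i * d i + C l i j * d j) / (2 * d l).

Lemma basE (i a : 'I_N) : (bas R i) a 0 = if a == i then 1 else 0.
Proof. by rewrite /bas mxE andbT; case: (a == i). Qed.

Lemma sum_bas (i : 'I_N) (f : 'I_N -> R) : \sum_a (bas R i) a 0 * f a = f i.
Proof.
rewrite (bigD1 i) //= big1 ?addr0; first by rewrite basE eqxx mul1r.
by move=> a /negbTE Ha; rewrite basE Ha mul0r.
Qed.

Lemma lbrE x y k : lbr brk x y k 0 = \sum_i \sum_j x i 0 * y j 0 * C i j k.
Proof.
rewrite /lbr summxE; apply: eq_bigr => i _; rewrite summxE; apply: eq_bigr => j _.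
by rewrite mxE.
Qed.

Lemma gformE x y : gform G x y = \sum_k x k 0 * d k * y k 0.
Proof.
rewrite /gform mxE; apply: eq_bigr => k _; rewrite mxE; congr (_ * _).
rewrite (bigD1 k) //= big1 ?addr0; first by rewrite mxE HG eqxx.
by move=> a /negbTE Ha; rewrite HG Ha mulr0.
Qed.

Lemma koszulE x y l : koszul brk G x y (bas R l) =
  2^-1 * \sum_i \sum_j x i 0 * y j 0 * (C i j l * d l - C j l i * d i + C l i j * d j).
Proof.
rewrite /koszul !gformE; congr (_ * _).
have E1 : \sum_k lbr brk x y k 0 * d k * (bas R l) k 0 = \sum_i \sum_j x i 0 * y j 0 * (C i j l * d l).
  rewrite (bigD1 l) //= big1 ?addr0; last by move=> a /negbTE Ha; rewrite basE Ha mulr0.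
  rewrite basE eqxx mulr1 lbrE big_distrl /=; apply: eq_bigr => i _.
  rewrite big_distrl /=; apply: eq_bigr => j _; ring.
have E2 : \sum_k lbr brk y (bas R l) k 0 * d k * x k 0 = \sum_i \sum_j x i 0 * y j 0 * (C j l i * d i).
  apply: eq_bigr => i _; rewrite lbrE big_distrl big_distrl /=; apply: eq_bigr => j _.
  have -> : \sum_j0 y j 0 * (bas R l) j0 0 * C j j0 i = y j 0 * C j l i.
    rewrite -(sum_bas l (fun a => y j 0 * C j a i)); apply: eq_bigr => a _; ring.
  ring.
have E3 : \sum_k lbr brk (bas R l) x k 0 * d k * y k 0 = \sum_i \sum_j x i 0 * y j 0 * (C l i j * d j).
  rewrite exchange_big /=; apply: eq_bigr => j _; rewrite lbrE.
  have -> : \sum_i \sum_j0 (bas R l) i 0 * x j0 0 * C i j0 j = \sum_j0 x j0 0 * C l j0 j.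
    rewrite -(sum_bas l (fun a => \sum_j0 x j0 0 * C a j0 j)); apply: eq_bigr => a _.
    rewrite big_distrr /=; apply: eq_bigr => b _; ring.
  rewrite big_distrl big_distrl /=; apply: eq_bigr => i _; ring.
rewrite E1 E2 E3 -sumrB -big_split /=; apply: eq_bigr => i _.
rewrite -sumrB -big_split /=; apply: eq_bigr => j _; ring.
Qed.

Definition Dinv : 'M[R]_N := \matrix_(i, j) (if i == j then (d i)^-1 else 0).

Lemma invG : invmx G^T = Dinv.
Proof.
have H1 : G^T *m Dinv = 1%:M.
  apply/matrixP => i j; rewrite !mxE (bigD1 j) //= big1 ?addr0.
    rewrite !mxE HG; case: (i =P j) => [<-|/eqP Hij]; first by rewrite !eqxx mulfV.
    by rewrite eq_sym (negbTE Hij) mul0r.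
  by move=> k /negbTE Hk; rewrite !mxE Hk mulr0.
have [U _] := mulmx1_unit H1.
by rewrite -[invmx _]mulmx1 -H1 mulmxA mulVmx // mul1mx.
Qed.

Lemma DinvE (v : 'cV[R]_N) l : (Dinv *m v) l 0 = v l 0 / d l.
Proof.
rewrite mxE (bigD1 l) //= big1 ?addr0; first by rewrite mxE eqxx mulrC.
by move=> k /negbTE Hk; rewrite mxE eq_sym Hk mul0r.
Qed.

Lemma DinvM (M : 'M[R]_N) i j : (Dinv *m M) i j = M i j / d i.
Proof.
rewrite mxE (bigD1 i) //= big1 ?addr0; first by rewrite mxE eqxx mulrC.
by move=> k /negbTE Hk; rewrite mxE eq_sym Hk mul0r.
Qed.

Lemma matBE (A B : 'cV[R]_N) l : (A - B) l 0 = A l 0 - B l 0.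
Proof. by rewrite !mxE. Qed.

Lemma nablaE x y l : nabla brk G x y l 0 = \sum_i \sum_j x i 0 * y j 0 * Gam0 i j l.
Proof.
rewrite /nabla invG DinvE mxE koszulE /Gam0 (mulrC 2^-1) -mulrA big_distrl /=.
apply: eq_bigr => i _; rewrite big_distrl /=; apply: eq_bigr => j _.
have := dnz l; move=> Hd; field; by rewrite Hd.
Qed.

Lemma sum_bas2 (i j : 'I_N) (f : 'I_N -> 'I_N -> R) :
  \sum_a \sum_b (bas R i) a 0 * (bas R j) b 0 * f a b = f i j.
Proof.
rewrite -(sum_bas i (fun a => f a j)); apply: eq_bigr => a _.
rewrite -(sum_bas j (f a)) big_distrr /=; apply: eq_bigr => b _; ring.
Qed.

Lemma ricciE i j : ricci_endo brk G i j =
  (\sum_x (\sum_k Gam0 j i k * Gam0 x k x - \sum_k Gam0 x i k * Gam0 j k x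
           - \sum_k C x j k * Gam0 k i x)) / d i.
Proof.
rewrite /ricci_endo invG DinvM mxE /ricci_form; congr (_ / _).
apply: eq_bigr => x _; rewrite /curv !matBE !nablaE.
have nb : forall a b l, nabla brk G (bas R a) (bas R b) l 0 = Gam0 a b l.
  by move=> a b l; rewrite nablaE sum_bas2.
have lb : forall a b l, lbr brk (bas R a) (bas R b) l 0 = C a b l.
  by move=> a b l; rewrite lbrE (sum_bas2 a b (fun i j => C i j l)).
have sL : forall (a : 'I_N) (v : 'I_N -> R) (f : 'I_N -> 'I_N -> R),
   \sum_i0 \sum_j0 (bas R a) i0 0 * v j0 * f i0 j0 = \sum_j0 v j0 * f a j0.
  move=> a v f; rewrite -(sum_bas a (fun i0 => \sum_j0 v j0 * f i0 j0)).
  apply: eq_bigr => i0 _; rewrite big_distrr /=; apply: eq_bigr => j0 _; ring.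
have sR : forall (a : 'I_N) (v : 'I_N -> R) (f : 'I_N -> 'I_N -> R),
   \sum_i0 \sum_j0 v i0 * (bas R a) j0 0 * f i0 j0 = \sum_i0 v i0 * f i0 a.
  move=> a v f; apply: eq_bigr => i0 _.
  rewrite -(sum_bas a (fun j0 => v i0 * f i0 j0)); apply: eq_bigr => j0 _; ring.
rewrite (sL x (fun j0 => nabla brk G (bas R j) (bas R i) j0 0) (fun i0 j0 => Gam0 i0 j0 x)).
rewrite (sL j (fun j0 => nabla brk G (bas R x) (bas R i) j0 0) (fun i0 j0 => Gam0 i0 j0 x)).
rewrite (sR i (fun i0 => lbr brk (bas R x) (bas R j) i0 0) (fun i0 j0 => Gam0 i0 j0 x)).
congr (_ - _ - _); apply: eq_bigr => k _; rewrite ?nb ?lb //; ring.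
Qed.
End Gen.

Definition toLn (i : nat) : lbl :=
  nth Zz [:: BR 1; BI 1; Ee 0; Ee 1; Ff 0; Ff 1; Zz; BR 2; BI 2; Ee 2; Ff 2] i.

Definition okpo (u v w : option nat) : bool :=
  match u, v, w with
  | None, None, None => true
  | Some a, Some b, None | Some a, None, Some b | None, Some a, Some b => a == b
  | _, _, _ => false
  end.

Lemma okpo_cyc u v w : okpo u v w = okpo v w u.
Proof. by case: u => [a|]; case: v => [b|]; case: w => [c|] //=; rewrite eq_sym. Qed.

Section Lab.
Variable m : nat.

Definition lab := (('I_7) + ('I_m * 'I_4))%type.

Definition toL (x : lab) : lbl :=
  match x with
  | inl p => nth Zz [:: BR 1; BI 1; Ee 0; Ee 1; Ff 0; Ff 1; Zz] p
  | inr (a, t) => nth Zz [:: BR a.+2; BI a.+2; Ee a.+2; Ff a.+2] t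
  end.

Definition pc (x : lab) : nat :=
  match x with inl p => nat_of_ord p | inr (_, t) => (7 + t)%N end.

Definition blk (x : lab) : option nat :=
  match x with inl _ => None | inr (a, _) => Some (nat_of_ord a) end.

Definition okp (u v w : lab) : bool := okpo (blk u) (blk v) (blk w).

Lemma okp_cyc u v w : okp u v w = okp v w u.
Proof. exact: okpo_cyc. Qed.

Lemma neq_ord (a b : 'I_m) : a != b -> ((a : nat) == b) = false /\ ((b : nat) == a) = false.
Proof. by move=> H; split; [exact: negbTE H | rewrite eq_sym; exact: negbTE H]. Qed.

End Lab.

Ltac splitord := match goal with |- context [ (nat_of_ord ?a == nat_of_ord ?b)%N ] =>
  let Hne := fresh "Hne" in let E1 := fresh "E" in let E2 := fresh "E" in
  case: (eqVneq a b) => [?|Hne]; [subst; rewrite ?eqxx | have [E1 E2] := neq_ord Hne; rewrite ?E1 ?E2 ] end.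

Ltac dord p H n := match n with
  | O => exfalso; by move: H
  | S ?k => case: p H => [|p] H; [ idtac | dord p H k ] end.

Ltac dlab := let p := fresh "p" in let a := fresh "a" in let t := fresh "t" in let H := fresh "H" in
  case=> [[p H]|[a [t H]]]; [ dord p H 7%N | dord t H 4%N ].

Definition BP (R : realType) m (x y w : lab m) : Prop :=
  brl R (toL x) (toL y) (toL w) =
  if okp x y w then brl R (toLn (pc x)) (toLn (pc y)) (toLn (pc w)) else 0.

Ltac bpt := rewrite /BP; dlab; dlab;
 rewrite /okp /okpo /toLn /brl /= ?eqSS;
 repeat splitord;
 rewrite ?eqxx /=; try reflexivity;
 rewrite /br0 /brBe /brBf /alRe /alIm /dlt /cBR /cBI /cZ /c0 /= ?eqSS ?eqxx /=;
 repeat (match goal with H : (?x == ?y) = false |- context [?x == ?y] => rewrite H end); try reflexivity;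
 rewrite ?(mul0r, mulr0, add0r, addr0, subr0, sub0r, oppr0, mulr1, mul1r, subrr); try reflexivity;
 ring.

Lemma bp_F0 (R : realType) m (H : (0 < 7)%N) : forall y w, BP R (m:=m) (inl (Ordinal H)) y w.
Proof. bpt. Qed.
Lemma bp_F1 (R : realType) m (H : (1 < 7)%N) : forall y w, BP R (m:=m) (inl (Ordinal H)) y w.
Proof. bpt. Qed.
Lemma bp_F2 (R : realType) m (H : (2 < 7)%N) : forall y w, BP R (m:=m) (inl (Ordinal H)) y w.
Proof. bpt. Qed.
Lemma bp_F3 (R : realType) m (H : (3 < 7)%N) : forall y w, BP R (m:=m) (inl (Ordinal H)) y w.
Proof. bpt. Qed.
Lemma bp_F4 (R : realType) m (H : (4 < 7)%N) : forall y w, BP R (m:=m) (inl (Ordinal H)) y w.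
Proof. bpt. Qed.
Lemma bp_F5 (R : realType) m (H : (5 < 7)%N) : forall y w, BP R (m:=m) (inl (Ordinal H)) y w.
Proof. bpt. Qed.
Lemma bp_F6 (R : realType) m (H : (6 < 7)%N) : forall y w, BP R (m:=m) (inl (Ordinal H)) y w.
Proof. bpt. Qed.
Lemma bp_B0 (R : realType) m (a : 'I_m) (H : (0 < 4)%N) : forall y w, BP R (inr (a, Ordinal H)) y w.
Proof. bpt. Qed.
Lemma bp_B1 (R : realType) m (a : 'I_m) (H : (1 < 4)%N) : forall y w, BP R (inr (a, Ordinal H)) y w.
Proof. bpt. Qed.
Lemma bp_B2 (R : realType) m (a : 'I_m) (H : (2 < 4)%N) : forall y w, BP R (inr (a, Ordinal H)) y w.
Proof. bpt. Qed.
Lemma bp_B3 (R : realType) m (a : 'I_m) (H : (3 < 4)%N) : forall y w, BP R (inr (a, Ordinal H)) y w.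
Proof. bpt. Qed.

Lemma brl_pat (R : realType) m (x y w : lab m) :
  brl R (toL x) (toL y) (toL w) =
  if okp x y w then brl R (toLn (pc x)) (toLn (pc y)) (toLn (pc w)) else 0.
Proof.
move: x y w; dlab; [exact: bp_F0|exact: bp_F1|exact: bp_F2|exact: bp_F3|exact: bp_F4|exact: bp_F5|exact: bp_F6
 |exact: bp_B0|exact: bp_B1|exact: bp_B2|exact: bp_B3].
Qed.

Section Copy.
Variable F : fieldType.
Definition dltF (i j : nat) : F := if i == j then 1 else 0.
Definition cBRF (a : nat) (c : F) : lbl -> F :=
  fun m => match m with BR b => if b == a then c else 0 | _ => 0 end.
Definition cBIF (a : nat) (c : F) : lbl -> F :=
  fun m => match m with BI b => if b == a then c else 0 | _ => 0 end.
Definition cZF (c : F) : lbl -> F :=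
  fun m => match m with Zz => c | _ => 0 end.
Definition c0F : lbl -> F := fun _ => 0.
Definition alReF (B : lbl) (k j : nat) : F :=
  match B with
  | BR a => if a == 1%N then - (dltF k 0 * dltF j 1) - dltF k 1 * dltF j 0
            else - 2^-1 * (dltF k 0 + dltF k 1) * dltF j a
                 - 2^-1 * dltF k a * (dltF j 0 - dltF j 1)
  | _ => 0
  end.
Definition alImF (B : lbl) (k j : nat) : F :=
  match B with
  | BI a => if a == 1%N then - ((dltF k 0 + dltF k 1) * (dltF j 0 - dltF j 1))
            else 2^-1 * (dltF k 0 + dltF k 1) * dltF j a
                 - 2^-1 * dltF k a * (dltF j 0 - dltF j 1)
  | _ => 0
  end.
Definition brBeF (B : lbl) (k : nat) : lbl -> F :=
  fun m => match m with
           | Ee j => alReF B k j | Ff j => alImF B k j | _ => 0 end.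
Definition brBfF (B : lbl) (k : nat) : lbl -> F :=
  fun m => match m with
           | Ff j => alReF B k j | Ee j => - alImF B k j | _ => 0 end.
Definition br0F (x y : lbl) : lbl -> F :=
  match x, y with
  | BR a, BI b =>
      if (a == 1%N) && (b == 1%N) then cBIF 1 2
      else if (a == 1%N) && (2 <= b)%N then cBIF b 1
      else if (2 <= a)%N && (a == b) then cBIF 1 2^-1
      else c0F
  | BR a, BR b => if (a == 1%N) && (2 <= b)%N then cBRF b 1 else c0F
  | Ee a, Ff b =>
      if (a == 0%N) && (b == 0%N) then cZF 1
      else if (1 <= a)%N && (a == b) then cZF (-1)
      else c0F
  | BR _, Ee k | BI _, Ee k => brBeF x k
  | BR _, Ff k | BI _, Ff k => brBfF x k
  | _, _ => c0F
  end.
Definition brlF (x y : lbl) : lbl -> F := fun m => br0F x y m - br0F y x m.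
End Copy.

Lemma brl_F (R : realType) x y w : brl R x y w = brlF R x y w.
Proof. reflexivity. Qed.

Section Morph.
Variable K : realType.
Local Notation F := rat.
Local Notation f := (@ratr K).

Lemma dltF_m i j : f (dltF F i j) = dltF K i j.
Proof. by rewrite /dltF; case: (i == j); rewrite ?rmorph1 ?rmorph0. Qed.

Lemma alReF_m B k j : f (alReF F B k j) = alReF K B k j.
Proof.
case: B => [a|a|a|a|] /=; rewrite ?rmorph0 //; case: ifP => _;
by rewrite -!dltF_m ?(rmorph_nat, rmorphB, rmorphD, rmorphM, rmorphN, fmorphV, rmorph1, rmorph0).
Qed.

Lemma alImF_m B k j : f (alImF F B k j) = alImF K B k j.
Proof.
case: B => [a|a|a|a|] /=; rewrite ?rmorph0 //; case: ifP => _;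
by rewrite -!dltF_m ?(rmorph_nat, rmorphB, rmorphD, rmorphM, rmorphN, fmorphV, rmorph1, rmorph0).
Qed.

Lemma br0F_m x y w : f (br0F F x y w) = br0F K x y w.
Proof.
rewrite /br0F /brBeF /brBfF /cBRF /cBIF /cZF /c0F.
case: x => [a|a|a|a|]; case: y => [b|b|b|b|] /=; rewrite ?rmorph0 //;
repeat (case: ifP => _); case: w => [c|c|c|c|] /=; rewrite ?rmorph0 //;
repeat (case: ifP => _);
by rewrite -?dltF_m ?(rmorph_nat, rmorphB, rmorphD, rmorphM, rmorphN, fmorphV, rmorph1, rmorph0, oppr0).
Qed.

Lemma brlF_m x y w : f (brlF F x y w) = brlF K x y w.
Proof. by rewrite /brlF -!br0F_m rmorphB. Qed.
End Morph.

Lemma brl_ratr (R : realType) x y w : brl R x y w = ratr (brlF rat x y w).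
Proof. by rewrite brl_F brlF_m. Qed.

Definition tstQ : bool := brlF rat (BR 1) (BI 1) (BI 1) == 2.
Lemma tst : tstQ. Proof. by vm_compute. Qed.

Definition wt (l : lbl) : nat := match l with BR _ | BI _ => 0 | Ee _ | Ff _ => 1 | Zz => 2 end.
Definition sd (l : lbl) : rat :=
  match l with BR a | BI a => if a == 1%N then 1 else 2^-1 | _ => 2^-1 end.

Lemma grade (R : realType) x y w : wt w != (wt x + wt y)%N -> brl R x y w = 0.
Proof.
rewrite /brl /br0.
case: x => [a|a|a|a|]; case: y => [b|b|b|b|]; case: w => [c|c|c|c|] //= _;
repeat (case: ifP => _); by rewrite /= ?subrr ?subr0 ?sub0r ?oppr0.
Qed.

Lemma sd_neq0 l : sd l != 0.
Proof. by case: l => [a|a|a|a|] //=; case: ifP. Qed.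

Section Sig.
Variable R : realType.
Variable rho : R.
Hypothesis Hrho : 0 < rho.

Definition ss : R := Num.sqrt (rho^-1).
Definition sig (l : lbl) : R := ratr (sd l) * ss ^+ wt l.

Lemma ss_gt0 : 0 < ss.
Proof. by rewrite /ss sqrtr_gt0 invr_gt0. Qed.

Lemma ss2 : ss ^+ 2 = rho^-1.
Proof. by rewrite /ss sqr_sqrtr // ltW // invr_gt0. Qed.

Lemma sig_neq0 l : sig l != 0.
Proof.
rewrite /sig mulf_neq0 // ?fmorph_eq0 ?sd_neq0 // expf_neq0 //.
by rewrite gt_eqF // ss_gt0.
Qed.

Lemma gl_sig l : gl rho 0 l l = sig l ^+ 2.
Proof.
have Hr : rho != 0 by rewrite gt_eqF.
rewrite /sig exprMn -exprM mulnC exprM ss2.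
case: l => [a|a|a|a|] /=; rewrite ?eqxx; try case: ifP => _;
rewrite ?rmorph1 ?fmorphV ?rmorph_nat ?expr0 ?expr1 /=; field; by rewrite ?Hr.
Qed.

Lemma ch_ratr (u v w : lbl) :
  brl R u v w * sig w / (sig u * sig v) = ratr (brlF rat u v w * sd w / (sd u * sd v)).
Proof.
case: (eqVneq (wt w) (wt u + wt v)%N) => Hw.
  have Hs : ss != 0 by rewrite gt_eqF // ss_gt0.
  have Hu : ratr (sd u) != 0 :> R by rewrite fmorph_eq0 sd_neq0.
  have Hv : ratr (sd v) != 0 :> R by rewrite fmorph_eq0 sd_neq0.
  rewrite /sig Hw exprD brl_ratr !(rmorphM, fmorphV).
  field. by rewrite Hu Hv !expf_neq0.
have H0 : brlF rat u v w = 0.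
  have H1 : ratr (brlF rat u v w) = 0 :> R by rewrite -brl_ratr grade.
  by move/eqP: H1; rewrite fmorph_eq0 => /eqP.
by rewrite grade // H0 !mul0r rmorph0.
Qed.
End Sig.

Definition chP (i j k : nat) : rat :=
  brlF rat (toLn i) (toLn j) (toLn k) * sd (toLn k) / (sd (toLn i) * sd (toLn j)).
Definition GhP (i j k : nat) : rat := (chP i j k - chP j k i + chP k i j) / 2.
Definition T1 (px pk py pz : nat) : rat := GhP py pz pk * GhP px pk px.
Definition T2 (px pk py pz : nat) : rat := GhP px pz pk * GhP py pk px.
Definition T3 (px pk py pz : nat) : rat := chP px py pk * GhP pk pz px.

Section LabR.
Variable m : nat.

Lemma sd_pc (x : lab m) : sd (toL x) = sd (toLn (pc x)).
Proof. by move: x; dlab. Qed.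
Lemma wt_pc (x : lab m) : wt (toL x) = wt (toLn (pc x)).
Proof. by move: x; dlab. Qed.

Definition FP (x k y z : lab m) : rat :=
  (okp y z k && okp x k x)%:R * T1 (pc x) (pc k) (pc y) (pc z)
  - (okp x z k && okp y k x)%:R * T2 (pc x) (pc k) (pc y) (pc z)
  - (okp x y k && okp k z x)%:R * T3 (pc x) (pc k) (pc y) (pc z).

Lemma bmul (a b : bool) (u v : rat) : (a && b)%:R * (u * v) = (a%:R * u) * (b%:R * v).
Proof. by case: a; case: b; rewrite /= ?mul1r ?mul0r ?mulr0. Qed.

Variable R : realType.
Variable rho : R.
Hypothesis Hrho : 0 < rho.

Lemma sig_pc (x : lab m) : sig rho (toL x) = sig rho (toLn (pc x)).
Proof. by rewrite /sig sd_pc wt_pc. Qed.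

Definition c3 (x y w : lab m) : R := brl R (toL x) (toL y) (toL w).
Definition chL (x y w : lab m) : R := c3 x y w * sig rho (toL w) / (sig rho (toL x) * sig rho (toL y)).
Definition Gh (x y w : lab m) : R := (chL x y w - chL y w x + chL w x y) / 2.
Definition dd (x : lab m) : R := gl rho 0 (toL x) (toL x).
Definition Ga (x y w : lab m) : R := (c3 x y w * dd w - c3 y w x * dd x + c3 w x y * dd y) / (2 * dd w).
Definition FFL (x k y z : lab m) : R := Ga y z k * Ga x k x - Ga x z k * Ga y k x - c3 x y k * Ga k z x.

Lemma chLE x y w : chL x y w = ratr ((okp x y w)%:R * chP (pc x) (pc y) (pc w)).
Proof.
rewrite /chL /c3 brl_pat !sig_pc; case: (okp x y w).
  by rewrite mul1r ch_ratr.
by rewrite !mul0r rmorph0.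
Qed.

Lemma qD (a b : rat) : ratr (a + b) = ratr a + ratr b :> R. Proof. exact: rmorphD. Qed.
Lemma qB (a b : rat) : ratr (a - b) = ratr a - ratr b :> R. Proof. exact: rmorphB. Qed.
Lemma qM (a b : rat) : ratr (a * b) = ratr a * ratr b :> R. Proof. exact: rmorphM. Qed.
Lemma qV (a : rat) : ratr (a^-1) = (ratr a)^-1 :> R. Proof. exact: fmorphV. Qed.
Lemma qn (k : nat) : ratr (k%:R) = k%:R :> R. Proof. exact: ratr_nat. Qed.

Lemma ratr3 (a b c : rat) : (ratr a - ratr b + ratr c) / 2 = ratr ((a - b + c) / 2) :> R.
Proof. by rewrite !(qn, qM, qB, qD, qV). Qed.

Lemma ratr_FF (a1 a2 a3 a4 a5 a6 : rat) :
  ratr a1 * ratr a2 - ratr a3 * ratr a4 - ratr a5 * ratr a6 = ratr (a1 * a2 - a3 * a4 - a5 * a6) :> R.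
Proof. by rewrite !(qM, qB). Qed.

Lemma GhE x y w : Gh x y w = ratr ((okp x y w)%:R * GhP (pc x) (pc y) (pc w)).
Proof.
rewrite /Gh !chLE (okp_cyc w x y) -(okp_cyc x y w) /GhP.
rewrite ratr3; congr ratr.
by case: (okp x y w); rewrite /= ?mul1r ?mul0r ?subrr ?add0r ?mul0r.
Qed.

Lemma FFLE x k y z : FFL x k y z = sig rho (toL y) * sig rho (toL z) *
  (Gh y z k * Gh x k x - Gh x z k * Gh y k x - chL x y k * Gh k z x).
Proof.
rewrite /FFL /Ga /Gh /chL /dd !gl_sig //.
have := sig_neq0 Hrho (toL x); have := sig_neq0 Hrho (toL y);
have := sig_neq0 Hrho (toL z); have := sig_neq0 Hrho (toL k).
move=> H1 H2 H3 H4.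
field. by rewrite H1 H2 H3 H4.
Qed.

Lemma FFLP x k y z : FFL x k y z = sig rho (toL y) * sig rho (toL z) * ratr (FP x k y z).
Proof.
by rewrite FFLE !GhE chLE /FP /T1 /T2 /T3 !bmul ratr_FF.
Qed.

Lemma SumFF (y z : lab m) : \sum_x \sum_k FFL x k y z =
  sig rho (toL y) * sig rho (toL z) * ratr (\sum_x \sum_k FP x k y z).
Proof.
rewrite rmorph_sum big_distrr; apply: eq_bigr => x _.
rewrite rmorph_sum big_distrr; apply: eq_bigr => k _; exact: FFLP.
Qed.
End LabR.

Lemma eq_Some (x y : nat) : (Some x == Some y) = (x == y). Proof. by []. Qed.
Lemma eq_SomeN (x : nat) : (Some x == None) = false. Proof. by []. Qed.
Lemma eq_NSome (x : nat) : (None == Some x) = false. Proof. by []. Qed.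
Lemma eq_NN : (None == None :> option nat) = true. Proof. by []. Qed.
Ltac simpo := rewrite ?eq_Some ?eq_SomeN ?eq_NSome ?eq_NN ?eqxx /= ?andbF ?andbT ?orbF ?orbT ?mul0r ?mul1r.

Section Sums.
Variable m : nat.
Local Notation lab := (lab m).

Lemma sum_lab (f : lab -> rat) :
  \sum_x f x = \sum_(p < 7) f (inl p) + \sum_(a < m) \sum_(t < 4) f (inr (a, t)).
Proof.
rewrite big_sumType /=; congr (_ + _).
by rewrite pair_big /=; apply: eq_bigr => -[a t] _.
Qed.

Lemma sum_constm (c : rat) : \sum_(a < m) c = m%:R * c.
Proof. by rewrite sumr_const card_ord mulr_natl. Qed.

Lemma SL1 (h : nat -> nat -> rat) :
  \sum_(x : lab) \sum_(k : lab) (blk k == None)%:R * h (pc x) (pc k) =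
  \sum_(k' < 7) \sum_(x' < 7) h x' k' + m%:R * \sum_(k' < 7) \sum_(s < 4) h (7 + s)%N k'.
Proof.
rewrite exchange_big sum_lab /=.
rewrite [X in _ + X]big1 ?addr0; last first.
  by move=> a _; apply: big1 => t _; apply: big1 => x _; simpo.
rewrite big_distrr -big_split /=; apply: eq_bigr => k' _.
rewrite sum_lab /=; congr (_ + _); first by apply: eq_bigr => p _; simpo.
by rewrite -sum_constm; apply: eq_bigr => a _; apply: eq_bigr => t _; simpo.
Qed.

Lemma SL2 (h : nat -> nat -> rat) :
  \sum_(x : lab) \sum_(k : lab) (blk x == blk k)%:R * h (pc x) (pc k) =
  \sum_(x' < 7) \sum_(k' < 7) h x' k' + m%:R * \sum_(s < 4) \sum_(u < 4) h (7 + s)%N (7 + u)%N.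
Proof.
rewrite sum_lab /=; congr (_ + _).
  apply: eq_bigr => x' _; rewrite sum_lab /=.
  rewrite [X in _ + X]big1 ?addr0; last first.
    by move=> a _; apply: big1 => t _; simpo.
  by apply: eq_bigr => k' _; simpo.
rewrite -sum_constm; apply: eq_bigr => a _; apply: eq_bigr => s _.
rewrite sum_lab /=.
rewrite [X in X + _]big1 ?add0r; last by move=> k' _; simpo.
rewrite (bigD1 a) //= [X in _ + X]big1 ?addr0.
  by apply: eq_bigr => u _; simpo.
move=> a' Ha'; apply: big1 => u _.
have [E1 E2] := neq_ord Ha'.
by rewrite eq_Some E2 mul0r.
Qed.

Lemma SL3 (b : 'I_m) (h : nat -> nat -> rat) :
  \sum_(x : lab) \sum_(k : lab)
     (((blk x == None) && (blk k == Some (nat_of_ord b))) ||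
      ((blk x == Some (nat_of_ord b)) && (blk k == None)))%:R * h (pc x) (pc k) =
  \sum_(x' < 7) \sum_(u < 4) h x' (7 + u)%N + \sum_(s < 4) \sum_(k' < 7) h (7 + s)%N k'.
Proof.
rewrite sum_lab /=; congr (_ + _).
  apply: eq_bigr => x' _; rewrite sum_lab /=.
  rewrite [X in X + _]big1 ?add0r; last by move=> k' _; simpo.
  rewrite (bigD1 b) //= [X in _ + X]big1 ?addr0.
    by apply: eq_bigr => u _; simpo.
  move=> a' Ha'; apply: big1 => u _.
  have [E1 E2] := neq_ord Ha'.
  by rewrite ?eq_NN ?eq_NSome ?eq_SomeN ?eq_Some ?E1 ?E2 /= ?andbF ?andFb ?orbF ?mul0r.
rewrite (bigD1 b) //= [X in _ + X]big1 ?addr0.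
  apply: eq_bigr => s _; rewrite sum_lab /=.
  rewrite [X in _ + X]big1 ?addr0; last first.
    by move=> a _; apply: big1 => t _; simpo.
  by apply: eq_bigr => k' _; simpo.
move=> a Ha; apply: big1 => s _.
have [E1 E2] := neq_ord Ha.
rewrite sum_lab /= big1 ?add0r; last by move=> k' _; rewrite ?eq_NN ?eq_NSome ?eq_SomeN ?eq_Some ?E1 ?E2 /= ?andbF ?andFb ?orbF ?mul0r.
by apply: big1 => a' _; apply: big1 => t _; simpo.
Qed.

End Sums.

Ltac natcase := repeat match goal with |- context [(?x == ?y)%N] =>
   case: (x =P y) => [?|?]; subst end.

Lemma condA (bx bk : option nat) :
  [/\ okpo None None bk && okpo bx bk bx = (bk == None),
      okpo bx None bk && okpo None bk bx = (bx == bk) &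
      okpo bx None bk && okpo bk None bx = (bx == bk)].
Proof.
case: bx => [a|]; case: bk => [c|] //=; rewrite ?eq_Some ?eq_SomeN ?eq_NSome ?eq_NN //=;
split; natcase; by rewrite ?eqxx.
Qed.

Definition cond3 (b : nat) (bx bk : option nat) : bool :=
  ((bx == None) && (bk == Some b)) || ((bx == Some b) && (bk == None)).

Lemma condB b (bx bk : option nat) :
  [/\ okpo (Some b) (Some b) bk && okpo bx bk bx = (bk == None),
      okpo bx (Some b) bk && okpo (Some b) bk bx = cond3 b bx bk &
      okpo bx (Some b) bk && okpo bk (Some b) bx = cond3 b bx bk].
Proof.
rewrite /cond3; case: bx => [a|]; case: bk => [c|] //=;
rewrite ?eq_Some ?eq_SomeN ?eq_NSome ?eq_NN ?eqxx //=; split; natcase; by rewrite ?eqxx.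
Qed.

Lemma condX (oy oz bx bk : option nat) : oy != oz ->
  [/\ okpo oy oz bk && okpo bx bk bx = false,
      okpo bx oz bk && okpo oy bk bx = false &
      okpo bx oy bk && okpo bk oz bx = false].
Proof.
case: oy => [b|]; case: oz => [c|]; case: bx => [a|]; case: bk => [d|] //=;
rewrite ?eq_Some ?eq_SomeN ?eq_NSome ?eq_NN ?eqxx //=; natcase; by rewrite ?eqxx.
Qed.

Definition nsum (n : nat) (f : nat -> rat) : rat := foldr (fun i acc => f i + acc) 0 (iota 0 n).

Lemma nsumE n (f : nat -> rat) : \sum_(i < n) f i = nsum n f.
Proof. rewrite -(big_mkord xpredT) unlock /reducebig /index_iota subn0 /nsum. by elim: (iota 0 n) => //= i s ->. Qed.

Lemma nsum2E a b (f : nat -> nat -> rat) :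
  \sum_(i < a) \sum_(j < b) f i j = nsum a (fun i => nsum b (fun j => f i j)).
Proof. rewrite -nsumE; apply: eq_bigr => i _; exact: nsumE. Qed.

Definition XA p q := nsum 7 (fun k => nsum 7 (fun x => T1 x k p q))
  - nsum 7 (fun x => nsum 7 (fun k => T2 x k p q))
  - nsum 7 (fun x => nsum 7 (fun k => T3 x k p q)).
Definition YA p q := nsum 7 (fun k => nsum 4 (fun s => T1 (7 + s) k p q))
  - nsum 4 (fun s => nsum 4 (fun u => T2 (7 + s) (7 + u) p q))
  - nsum 4 (fun s => nsum 4 (fun u => T3 (7 + s) (7 + u) p q)).
Definition XB y z := nsum 7 (fun k => nsum 7 (fun x => T1 x k y z))
  - (nsum 7 (fun x => nsum 4 (fun u => T2 x (7 + u) y z)) + nsum 4 (fun s => nsum 7 (fun k => T2 (7 + s) k y z)))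
  - (nsum 7 (fun x => nsum 4 (fun u => T3 x (7 + u) y z)) + nsum 4 (fun s => nsum 7 (fun k => T3 (7 + s) k y z))).
Definition YB y z := nsum 7 (fun k => nsum 4 (fun s => T1 (7 + s) k y z)).

Definition r0 (c : nat) : rat := nth 0 [:: -8; -8; -2; -2; -2; -2; 4; -8; -8; -2; -2] c.
Definition r1 (c : nat) : rat := nth 0 [:: -2; -2; 0; 0; 0; 0; 2; -2; -2; 0; 0] c.

Definition chkA : bool := all (fun p => all (fun q =>
   (XA p q == (p == q)%:R * r0 p) && (YA p q == (p == q)%:R * r1 p)) (iota 0 7)) (iota 0 7).
Definition chkB : bool := all (fun t => all (fun t' =>
   (XB (7 + t) (7 + t') == (t == t')%:R * r0 (7 + t)) && (YB (7 + t) (7 + t') == (t == t')%:R * r1 (7 + t)))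
   (iota 0 4)) (iota 0 4).

Lemma chkA_ok : chkA. Proof. vm_compute. reflexivity. Qed.
Lemma chkB_ok : chkB. Proof. vm_compute. reflexivity. Qed.

Section Main.
Variable m : nat.
Local Notation lab := (lab m).

Lemma condA' (y z x k : lab) : blk y = None -> blk z = None ->
  [/\ okp y z k && okp x k x = (blk k == None),
      okp x z k && okp y k x = (blk x == blk k) &
      okp x y k && okp k z x = (blk x == blk k)].
Proof. by rewrite /okp => -> ->; exact: condA. Qed.

Lemma condB' (b : nat) (y z x k : lab) : blk y = Some b -> blk z = Some b ->
  [/\ okp y z k && okp x k x = (blk k == None),
      okp x z k && okp y k x = cond3 b (blk x) (blk k) &
      okp x y k && okp k z x = cond3 b (blk x) (blk k)].
Proof. by rewrite /okp => -> ->; exact: condB. Qed.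

Lemma condX' (y z x k : lab) : blk y != blk z ->
  [/\ okp y z k && okp x k x = false,
      okp x z k && okp y k x = false &
      okp x y k && okp k z x = false].
Proof. rewrite /okp; exact: condX. Qed.

Lemma sum3 (A B C : lab -> lab -> rat) :
  \sum_x \sum_k (A x k - B x k - C x k) =
  \sum_x \sum_k A x k - \sum_x \sum_k B x k - \sum_x \sum_k C x k.
Proof.
rewrite -!sumrB; apply: eq_bigr => x _; by rewrite !sumrB.
Qed.

Lemma chkA_pq (p q : nat) : (p < 7)%N -> (q < 7)%N ->
  XA p q = (p == q)%:R * r0 p /\ YA p q = (p == q)%:R * r1 p.
Proof.
move=> Hp Hq; have := chkA_ok; move/allP/(_ p); rewrite mem_iota add0n Hp => /(_ isT).
by move/allP/(_ q); rewrite mem_iota add0n Hq => /(_ isT) /andP [/eqP -> /eqP ->].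
Qed.

Lemma chkB_tt (t t' : nat) : (t < 4)%N -> (t' < 4)%N ->
  XB (7 + t) (7 + t') = (t == t')%:R * r0 (7 + t) /\ YB (7 + t) (7 + t') = (t == t')%:R * r1 (7 + t).
Proof.
move=> Hp Hq; have := chkB_ok; move/allP/(_ t); rewrite mem_iota add0n Hp => /(_ isT).
by move/allP/(_ t'); rewrite mem_iota add0n Hq => /(_ isT) /andP [/eqP -> /eqP ->].
Qed.

Lemma MainA (p q : 'I_7) : \sum_(x : lab) \sum_(k : lab) FP x k (inl p) (inl q) =
  (p == q :> nat)%:R * (r0 p + m%:R * r1 p).
Proof.
have E : forall x k : lab, FP x k (inl p) (inl q) =
   (blk k == None)%:R * T1 (pc x) (pc k) p q - (blk x == blk k)%:R * T2 (pc x) (pc k) p q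
   - (blk x == blk k)%:R * T3 (pc x) (pc k) p q.
  by move=> x k; rewrite /FP; have [E1 E2 E3] := condA' x k (erefl : blk (inl p) = None) (erefl : blk (inl q) = None); rewrite ?E1 ?E2 ?E3.
under eq_bigr => x _ do under eq_bigr => k _ do rewrite E.
rewrite sum3.
rewrite (SL1 m (fun a b => T1 a b p q)) (SL2 m (fun a b => T2 a b p q)) (SL2 m (fun a b => T3 a b p q)).
rewrite (nsum2E 7 7 (fun k x => T1 x k p q)) (nsum2E 7 4 (fun k s => T1 (7 + s) k p q))
  (nsum2E 7 7 (fun x k => T2 x k p q)) (nsum2E 4 4 (fun s u => T2 (7 + s) (7 + u) p q))
  (nsum2E 7 7 (fun x k => T3 x k p q)) (nsum2E 4 4 (fun s u => T3 (7 + s) (7 + u) p q)).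
have [hX hY] := chkA_pq (ltn_ord p) (ltn_ord q).
transitivity (XA p q + m%:R * YA p q); first by rewrite /XA /YA; ring.
by rewrite hX hY; ring.
Qed.

Lemma MainB (b : 'I_m) (t t' : 'I_4) :
  \sum_(x : lab) \sum_(k : lab) FP x k (inr (b, t)) (inr (b, t')) =
  (t == t' :> nat)%:R * (r0 (7 + t) + m%:R * r1 (7 + t)).
Proof.
have E : forall x k : lab, FP x k (inr (b, t)) (inr (b, t')) =
   (blk k == None)%:R * T1 (pc x) (pc k) (7 + t) (7 + t')
   - (((blk x == None) && (blk k == Some (nat_of_ord b))) ||
      ((blk x == Some (nat_of_ord b)) && (blk k == None)))%:R * T2 (pc x) (pc k) (7 + t) (7 + t')
   - (((blk x == None) && (blk k == Some (nat_of_ord b))) ||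
      ((blk x == Some (nat_of_ord b)) && (blk k == None)))%:R * T3 (pc x) (pc k) (7 + t) (7 + t').
  by move=> x k; rewrite /FP; have [E1 E2 E3] := condB' x k (erefl : blk (inr (b, t)) = Some (nat_of_ord b)) (erefl : blk (inr (b, t')) = Some (nat_of_ord b)); rewrite ?E1 ?E2 ?E3 /cond3.
under eq_bigr => x _ do under eq_bigr => k _ do rewrite E.
rewrite sum3.
rewrite (SL1 m (fun a c => T1 a c (7 + t) (7 + t'))) (SL3 b (fun a c => T2 a c (7 + t) (7 + t')))
  (SL3 b (fun a c => T3 a c (7 + t) (7 + t'))).
rewrite (nsum2E 7 7 (fun k x => T1 x k (7 + t) (7 + t'))) (nsum2E 7 4 (fun k s => T1 (7 + s) k (7 + t) (7 + t')))
  (nsum2E 7 4 (fun x u => T2 x (7 + u) (7 + t) (7 + t'))) (nsum2E 4 7 (fun s k => T2 (7 + s) k (7 + t) (7 + t')))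
  (nsum2E 7 4 (fun x u => T3 x (7 + u) (7 + t) (7 + t'))) (nsum2E 4 7 (fun s k => T3 (7 + s) k (7 + t) (7 + t'))).
have [hX hY] := chkB_tt (ltn_ord t) (ltn_ord t').
transitivity (XB (7 + t) (7 + t') + m%:R * YB (7 + t) (7 + t')); first by rewrite /XB /YB; ring.
by rewrite hX hY; ring.
Qed.

Lemma MainX (y z : lab) : blk y != blk z -> \sum_(x : lab) \sum_(k : lab) FP x k y z = 0.
Proof.
move=> H; apply: big1 => x _; apply: big1 => k _.
rewrite /FP; have [-> -> ->] := condX' x k H.
by rewrite !mul0r !subr0.
Qed.

Definition rv (y : lab) : rat := r0 (pc y) + m%:R * r1 (pc y).

Lemma MainAll (y z : lab) : \sum_(x : lab) \sum_(k : lab) FP x k y z = (y == z)%:R * rv y.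
Proof.
case: y => [p|[b t]]; case: z => [q|[b' t']].
- by rewrite MainA.
- rewrite MainX //.
  by have -> : (inl p == inr (b', t') :> lab) = false by []; rewrite mul0r.
- rewrite MainX //.
  by have -> : (inr (b, t) == inl q :> lab) = false by []; rewrite mul0r.
- case: (eqVneq b b') => [<-|Hb].
    rewrite MainB /rv /=.
    have -> : (inr (b, t) == inr (b, t') :> lab) = (t == t' :> nat).
      by apply/eqP/eqP => [[->]|/val_inj ->].
    by [].
  rewrite MainX /=; last by rewrite eq_Some; have [-> _] := neq_ord Hb.
  have -> : (inr (b, t) == inr (b', t') :> lab) = false.
    by apply/eqP => -[E _]; move/eqP: Hb; rewrite E.
  by rewrite mul0r.
Qed.
End Main.

Section Dec.
Variable m : nat.
Local Notation n := m.+2.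

Lemma lNE : lN n = (4 * m + 7)%N.
Proof. rewrite /lN; lia. Qed.

Definition enc (l : lbl) : nat :=
  match l with
  | BR a => a.-1 | BI a => (m.+1 + a.-1)%N | Ee k => (2 * m.+1 + k)%N
  | Ff k => (2 * m.+1 + m.+2 + k)%N | Zz => (2 * m.+1 + 2 * m.+2)%N end.

Lemma encK i : (i < lN n)%N -> enc (decode n i) = i.
Proof.
rewrite lNE /decode /= => Hi.
case: ifP => H1 /=; first by [].
case: ifP => H2 /=; first lia.
case: ifP => H3 /=; first lia.
case: ifP => H4 /=; lia.
Qed.

Lemma decode_inj (i j : 'I_(lN n)) : decode n i = decode n j -> i = j.
Proof.
move=> E; apply: val_inj => /=.
by rewrite -(encK (ltn_ord i)) -(encK (ltn_ord j)) E.
Qed.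

Lemma toL_inj : injective (@toL m).
Proof.
move=> x y; move: x y; dlab; dlab => //= E; try (case: E => E); try (congr inr; congr pair; apply: val_inj; lia).
all: try (by congr inl; apply: val_inj).
all: move/val_inj: E => ->; congr inr; congr pair; exact: val_inj.
Qed.

Lemma enc_lt (x : lab m) : (enc (toL x) < lN n)%N.
Proof.
rewrite lNE; move: x; dlab => /=; try lia.
all: match goal with a : 'I_m |- _ => have := ltn_ord a; lia end.
Qed.

Lemma decEnc (x : lab m) : decode n (enc (toL x)) = toL x.
Proof.
move: x; dlab => //=.
all: (try match goal with a : 'I_m |- _ => have Ha := ltn_ord a end).
all: rewrite /decode /=; repeat (case: ifP => ?); try lia; try reflexivity; f_equal; lia.
Qed.

Definition hL (x : lab m) : 'I_(lN n) := Ordinal (enc_lt x).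

Lemma hL_bij : bijective hL.
Proof.
apply: inj_card_bij.
  move=> x y E; apply: toL_inj; rewrite -decEnc -[RHS]decEnc.
  by move: E => /(congr1 val) /= ->.
by rewrite card_sum card_prod !card_ord lNE; lia.
Qed.

Lemma sum_dec (R : realType) (f : lbl -> R) :
  \sum_(i < lN n) f (decode n i) = \sum_(x : lab m) f (toL x).
Proof.
rewrite (reindex hL); last exact: onW_bij hL_bij.
by apply: eq_bigr => x _; rewrite /= decEnc.
Qed.

Lemma decode_surj (i : 'I_(lN n)) : exists x : lab m, toL x = decode n i.
Proof.
case: hL_bij => g hg gh; exists (g i).
by rewrite -decEnc; congr decode; exact: (congr1 val (gh i)).
Qed.

End Dec.

Lemma gl_off (R : realType) (rho : R) (x y : lbl) : x <> y -> gl rho 0 x y = 0.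
Proof.
case: x => [a|a|a|a|]; case: y => [b|b|b|b|] //= H;
  try (case: (a =P b) => [E|_]; [by rewrite E in H|done]);
  by case: ifP => _; rewrite ?mul0r ?oppr0 ?mul0r.
Qed.

Section Final.
Variables (R : realType) (m : nat) (rho : R).
Hypothesis Hrho : 0 < rho.
Local Notation N := (lN m.+2).

Definition dfun (i : 'I_N) : R := gl rho 0 (decode m.+2 i) (decode m.+2 i).

Lemma dfun_neq0 i : dfun i != 0.
Proof. by rewrite /dfun gl_sig // expf_neq0 // sig_neq0. Qed.

Lemma gramE i j : gram m.+2 rho 0 i j = if i == j then dfun i else 0.
Proof.
rewrite /gram mxE; case: (eqVneq i j) => [->|Hij] //.
apply: gl_off => E; move/eqP: Hij; apply; exact: decode_inj.
Qed.

Definition GaL (u v w : lbl) : R :=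
  (brl R u v w * gl rho 0 w w - brl R v w u * gl rho 0 u u + brl R w u v * gl rho 0 v v)
  / (2 * gl rho 0 w w).
Definition FFlbl (u k y z : lbl) : R :=
  GaL y z k * GaL u k u - GaL u z k * GaL y k u - brl R u y k * GaL k z u.

Lemma Gam0E i j l : Gam0 (lbrk R (n:=m.+2)) dfun i j l = GaL (decode m.+2 i) (decode m.+2 j) (decode m.+2 l).
Proof. by rewrite /Gam0 /lbrk !mxE. Qed.

Lemma q0 : ratr 0 = 0 :> R. Proof. exact: rmorph0. Qed.
Lemma qN (a : rat) : ratr (- a) = - ratr a :> R. Proof. exact: rmorphN. Qed.

Lemma rv_val (y : lab m) :
  ratr (rv y) = - (2 * m + 8)%:R + (2 * m + 6)%:R * (wt (toL y))%:R :> R.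
Proof.
rewrite /rv; move: y; dlab; rewrite /r0 /r1 /= !(qD, qM, qN, qn, q0) ?natrD ?natrM; ring.
Qed.

Definition Dm : 'M[R]_N := \matrix_(i, j) ((i == j)%:R * ((2 * m + 6)%:R * (wt (decode m.+2 i))%:R)).
Definition lam : R := - (2 * m + 8)%:R.

Lemma ricci_ij (i j : 'I_N) :
  ricci_endo (lbrk R (n:=m.+2)) (gram m.+2 rho 0) i j = (lam%:M + Dm) i j.
Proof.
rewrite (ricciE (lbrk R (n:=m.+2)) dfun_neq0 gramE).
have [yl Hy] := decode_surj j; have [zl Hz] := decode_surj i.
have E1 : \sum_(x : 'I_N) (\sum_(k : 'I_N) Gam0 (lbrk R (n:=m.+2)) dfun j i k * Gam0 (lbrk R (n:=m.+2)) dfun x k x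
      - \sum_(k : 'I_N) Gam0 (lbrk R (n:=m.+2)) dfun x i k * Gam0 (lbrk R (n:=m.+2)) dfun j k x
      - \sum_(k : 'I_N) lbrk R x j k 0 * Gam0 (lbrk R (n:=m.+2)) dfun k i x)
    = \sum_(x : 'I_N) \sum_(k : 'I_N) FFlbl (decode m.+2 x) (decode m.+2 k) (decode m.+2 j) (decode m.+2 i).
  apply: eq_bigr => x _; rewrite -!sumrB; apply: eq_bigr => k _.
  by rewrite !Gam0E /lbrk mxE.
rewrite E1.
rewrite (eq_bigr (fun x : 'I_N => \sum_(k : lab m) FFlbl (decode m.+2 x) (toL k) (decode m.+2 j) (decode m.+2 i))); last first.
  by move=> x _; rewrite (@sum_dec m R (fun kk => FFlbl (decode m.+2 x) kk (decode m.+2 j) (decode m.+2 i))).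
rewrite (@sum_dec m R (fun xx : lbl => \sum_(k : lab m) FFlbl xx (toL k) (decode m.+2 j) (decode m.+2 i))).
rewrite -Hy -Hz.
have -> : \sum_(x : lab m) \sum_(k : lab m) FFlbl (toL x) (toL k) (toL yl) (toL zl)
   = \sum_(x : lab m) \sum_(k : lab m) FFL rho x k yl zl by [].
rewrite (SumFF Hrho) MainAll.
rewrite /dfun -Hz !mxE.
case: (eqVneq yl zl) => [E|Hne].
  subst zl.
  have Eij : i = j by apply: decode_inj; rewrite -Hy -Hz.
  subst j; rewrite eqxx /= !mul1r mulr1n gl_sig //.
  rewrite -Hz rv_val /lam.
  have := sig_neq0 Hrho (toL yl) => Hs.
  by field.
have Hij : i != j.
  apply/eqP => Eij; subst j; move/eqP: Hne; apply; apply: (@toL_inj m); by rewrite Hy Hz.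
rewrite (negbTE Hij) /= !mul0r q0 mulr0 !mul0r mulr0n.
by rewrite add0r.
Qed.

Lemma Dm_mul (v : 'cV[R]_N) l : (Dm *m v) l 0 = (2 * m + 6)%:R * (wt (decode m.+2 l))%:R * v l 0.
Proof.
rewrite mxE (bigD1 l) //= big1 ?addr0; first by rewrite mxE eqxx mul1r.
by move=> k /negbTE Hk; rewrite mxE eq_sym Hk mul0r mul0r.
Qed.

Lemma matDE (A B : 'cV[R]_N) l : (A + B) l 0 = A l 0 + B l 0.
Proof. by rewrite !mxE. Qed.

Lemma Dm_der : is_derivation (lbrk R (n:=m.+2)) Dm.
Proof.
move=> x y; apply/matrixP => l c; rewrite (ord1 c) matDE Dm_mul !lbrE.
rewrite big_distrr -big_split /=; apply: eq_bigr => i _.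
rewrite big_distrr -big_split /=; apply: eq_bigr => j _.
rewrite ?Dm_mul ?mxE.
case: (eqVneq (wt (decode m.+2 l)) (wt (decode m.+2 i) + wt (decode m.+2 j))%N) => Hw.
  rewrite Hw natrD; ring.
by rewrite grade // !mulr0 addr0.
Qed.
End Final.

Theorem theorem4p11 (R : realType) (n : nat) (rho : R) :
  (1 < n)%N -> 0 < rho ->
  exists (lam : R) (D : 'M[R]_(lN n)),
    is_derivation (@lbrk R n) D /\
    ricci_endo (@lbrk R n) (gram n rho 0) = lam%:M + D.
Proof.
case: n => [|[|m]] //= _ Hrho.
exists (lam R m), (Dm R m); split; first exact: Dm_der.
apply/matrixP => i j; exact: ricci_ij.
Qed.
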